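(* Let $g:[0,1]\to[0,1]$ be a continuous piecewise linear unimodal map and let $f(x)=1-|1-2x|$ be the tent map. Suppose there is a piecewise linear homeomorphism $h:[0,1]\to[0,1]$ with $h\circ f=g\circ h$. Then $g$ is linear on some interval $[0,\delta]$, $\delta>0$, with slope $2$, i.e. $g'(0)=2$.
   Context: A map $g:[0,1]\to[0,1]$ is called unimodal if there is $v\in(0,1)$ such that $g$ is increasing on $[0,v]$, decreasing on $[v,1]$, and $g(0)=g(1)=0$, $g(v)=1$. Piecewise linear means continuous with finitely many points of non-differentiability (kinks). *)

(* Defs.v *)
From Stdlib Require Import Reals Lra.
Open Scope R_scope.

Definition tent (x : R) : R := 1 - Rabs (1 - 2 * x).

(* Piecewise linear on [0,1]: there is a finite partition
   0 = p 0 < p 1 < ... < p n = 1 such that the map is affine on each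
   closed piece [p i, p (i+1)].  (Affine on adjacent closed pieces
   implies continuity on [0,1], with finitely many kinks.) *)
Definition piecewise_linear01 (g : R -> R) : Prop :=
  exists (n : nat) (p : nat -> R),
    p 0%nat = 0 /\ p n = 1 /\
    (forall i, (i < n)%nat -> p i < p (S i)) /\
    (forall i, (i < n)%nat -> exists a b : R,
       forall x, p i <= x <= p (S i) -> g x = a * x + b).

Definition maps01 (g : R -> R) : Prop :=
  forall x, 0 <= x <= 1 -> 0 <= g x <= 1.

Definition unimodal01 (g : R -> R) : Prop :=
  exists v : R, 0 < v < 1 /\
    (forall x y, 0 <= x <= y -> y <= v -> g x <= g y) /\
    (forall x y, v <= x <= y -> y <= 1 -> g y <= g x) /\
    g 0 = 0 /\ g 1 = 0 /\ g v = 1.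

Definition homeo01 (h : R -> R) : Prop :=
  maps01 h /\
  (forall x, 0 <= x <= 1 -> continuity_pt h x) /\
  exists k : R -> R, maps01 k /\
    (forall y, 0 <= y <= 1 -> continuity_pt k y) /\
    (forall x, 0 <= x <= 1 -> k (h x) = x) /\
    (forall y, 0 <= y <= 1 -> h (k y) = y).

(* Main.v *)
Require Import Defs.
From Stdlib Require Import Reals Lra Lia.
Open Scope R_scope.

Definition clamp t := (Rabs t - Rabs (t-1) + 1)/2.
Lemma clamp_cont : continuity clamp.
Proof. unfold clamp. intro x. reg. Qed.
Lemma clamp_id t : 0 <= t <= 1 -> clamp t = t.
Proof. intros. unfold clamp. rewrite (Rabs_right t) by lra.
  rewrite (Rabs_left1 (t-1)) by lra. lra. Qed.

Lemma first_piece (g : R -> R) : piecewise_linear01 g ->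
  exists e a b, 0 < e <= 1 /\ forall x, 0 <= x <= e -> g x = a * x + b.
Proof.
  intros [n [p [H0 [Hn [Hinc Haff]]]]].
  destruct n as [|n]. { lra. }
  destruct (Haff 0%nat ltac:(lia)) as [a [b Hab]].
  assert (Hp := Hinc 0%nat ltac:(lia)).
  exists (Rmin (p 1%nat) 1), a, b. split.
  - split; [apply Rmin_glb_lt; lra | apply Rmin_r].
  - intros x Hx. apply Hab. rewrite H0. split; [lra|].
    pose proof (Rmin_l (p 1%nat) 1). lra.
Qed.

Theorem lemma3p21 (g h : R -> R) :
  maps01 g -> piecewise_linear01 g -> unimodal01 g ->
  piecewise_linear01 h -> homeo01 h ->
  (forall x, 0 <= x <= 1 -> h (tent x) = g (h x)) ->
  exists delta : R, 0 < delta <= 1 /\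
    (forall x, 0 <= x <= delta -> g x = 2 * x).
Proof.
  intros Mg PLg [v [Hv [_ [_ [Hg0 [Hg1 _]]]]]] PLh [Mh [Ch [k [Mk [_ [Hkh Hhk]]]]]] Hconj.
  destruct (first_piece g PLg) as [q [a [b [Hq Hgab]]]].
  destruct (first_piece h PLh) as [e [c [d [He Hhcd]]]].
  assert (Hb : b = 0). { rewrite <- Hg0, (Hgab 0) by lra. ring. }
  subst b.
  assert (Hd0 : h 0 = d). { rewrite (Hhcd 0) by lra. ring. }
  assert (Hc : c <> 0).
  { intro. subst c. assert (h e = h 0) by (rewrite Hd0, (Hhcd e) by lra; ring).
    assert (k (h e) = k (h 0)) by congruence.
    rewrite !Hkh in H0 by lra. lra. }
  assert (Ht0 : tent 0 = 0). { unfold tent. rewrite Rabs_right; lra. }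
  assert (Hd : d = 0).
  { destruct (Mh 0 ltac:(lra)) as [Hd1 Hd2]. rewrite Hd0 in Hd1, Hd2.
    destruct (Req_dec d 1) as [E1|E1].
    { pose proof (Hconj 0 ltac:(lra)). rewrite Ht0, Hd0, E1, Hg1 in H. lra. }
    destruct (Req_dec d 0) as [E0|E0]; [exact E0|].
    exfalso.
    set (y := if Rlt_dec 0 c then d/2 else (d+1)/2).
    assert (Hy : 0 <= y <= 1) by (unfold y; destruct Rlt_dec; lra).
    assert (Hyd : (h e - d) * (y - d) < 0).
    { rewrite (Hhcd e) by lra. unfold y; destruct Rlt_dec.
      - assert (0 < c * e) by (apply Rmult_lt_0_compat; lra).
        assert (0 < (c*e) * (d/2)) by (apply Rmult_lt_0_compat; lra). nra.
      - assert (c < 0) by lra. assert (c * e < 0) by nra. nra. }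
    set (z := k y).
    destruct (Mk y Hy) as [Hz1 Hz2]. fold z in Hz1, Hz2.
    assert (Hhz : h z = y) by (apply Hhk; exact Hy).
    assert (Hz0 : 0 < z).
    { destruct (Req_dec z 0) as [Z|Z]; [|lra]. rewrite Z, Hd0 in Hhz.
      unfold y in Hhz; destruct Rlt_dec; lra. }
    set (F := fun t => h (clamp t) - d).
    assert (CF : continuity F).
    { intro t. unfold F. apply continuity_pt_minus; [|apply continuity_pt_const; intros ? ?; reflexivity].
      change (fun t0 => h (clamp t0)) with (comp h clamp).
      apply continuity_pt_comp; [apply clamp_cont|].
      apply Ch. unfold clamp.
      destruct (Rle_dec 0 t); destruct (Rle_dec t 1).
      - rewrite Rabs_right, Rabs_left1 by lra. lra.
      - rewrite Rabs_right, Rabs_right by lra. lra.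
      - rewrite Rabs_left1, Rabs_left1 by lra. lra.
      - lra. }
    assert (Fe : F e = h e - d) by (unfold F; rewrite clamp_id by lra; reflexivity).
    assert (Fz : F z = y - d) by (unfold F; rewrite clamp_id by lra; congruence).
    assert (Hw : forall w, Rmin z e <= w <= Rmax z e -> F w = 0 -> False).
    { intros w Hw Fw. unfold F in Fw.
      assert (0 < Rmin z e) by (apply Rmin_glb_lt; lra).
      assert (Rmax z e <= 1) by (apply Rmax_lub; lra).
      rewrite clamp_id in Fw by lra.
      assert (k (h w) = k (h 0)) by (rewrite Hd0; f_equal; lra).
      rewrite !Hkh in H1 by lra. lra. }
    destruct (Rle_dec z e).
    + destruct (IVT_cor F z e CF r) as [w [Hw1 Hw2]].
      { rewrite Fe, Fz. nra. }
      apply (Hw w); [|exact Hw2]. rewrite Rmin_left, Rmax_right; lra.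
    + destruct (IVT_cor F e z CF ltac:(lra)) as [w [Hw1 Hw2]].
      { rewrite Fe, Fz. nra. }
      apply (Hw w); [|exact Hw2]. rewrite Rmin_right, Rmax_left; lra. }
  rewrite Hd in Hhcd. setoid_rewrite Rplus_0_r in Hhcd.
  assert (Hcp : 0 < c).
  { destruct (Mh e ltac:(lra)). rewrite (Hhcd e) in H by lra.
    assert (0 <= c * e) by lra.
    destruct (Rle_lt_dec c 0); [|lra].
    assert (c < 0) by lra. nra. }
  set (x := Rmin (e/2) (q/(2*c))).
  assert (Hx1 : x <= e/2) by apply Rmin_l.
  assert (Hx2 : x <= q/(2*c)) by apply Rmin_r.
  assert (Hx0 : 0 < x).
  { apply Rmin_glb_lt; [lra|]. apply Rdiv_lt_0_compat; lra. }
  assert (Hcx : c * x <= q/2).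
  { apply Rmult_le_compat_l with (r := c) in Hx2; [|lra].
    replace (c * (q / (2*c))) with (q/2) in Hx2 by (field; lra). lra. }
  pose proof (Hconj x ltac:(lra)) as HC.
  assert (Htx : tent x = 2 * x).
  { unfold tent. rewrite Rabs_right; lra. }
  rewrite (Hhcd x) in HC by lra.
  rewrite Htx, (Hhcd (2*x)) in HC by lra.
  assert (0 <= c * x) by nra.
  rewrite (Hgab (c*x)) in HC by lra.
  assert (Ha : a = 2).
  { assert ((a - 2) * (c * x) = 0) by lra.
    apply Rmult_integral in H0. destruct H0; [lra|].
    assert (0 < c * x) by nra. lra. }
  exists q. split; [lra|]. intros y Hy. rewrite (Hgab y Hy), Ha. ring.
Qed.
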